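(* Let $n,d\ge1$. For $k\ge1$ let $\mathbf M_k\in\mathbb R^{n\times n}$ be invertible; for $k\ge0$ let $\mathbf H_k\in\mathbb R^{d\times n}$, $\mathbf R_k\in\mathbb R^{d\times d}$ symmetric positive definite and ${\boldsymbol\Omega}_k=\mathbf H_k^{\mathrm T}\mathbf R_k^{-1}\mathbf H_k$. Let $\mathbf M_{k:l}=\mathbf M_k\cdots\mathbf M_{l+1}$ ($\mathbf M_{k:k}=\mathbf I_n$), let $\mathbf P_0$ be symmetric positive semi-definite and $\mathbf P_{k+1}=\mathbf M_{k+1}(\mathbf I_n+\mathbf P_k{\boldsymbol\Omega}_k)^{-1}\mathbf P_k\mathbf M_{k+1}^{\mathrm T}$ for $k\ge0$. Let ${\boldsymbol\Gamma}_k=\sum_{l=0}^{k-1}\mathbf M_{k:l}^{-\mathrm T}{\boldsymbol\Omega}_l\mathbf M_{k:l}^{-1}$. If $\det({\boldsymbol\Gamma}_k)\neq0$, then $\mathbf P_k\le{\boldsymbol\Gamma}_k^{-1}$, and hence $$\mathbf P_k\le\min\big\{\mathbf M_{k:0}\mathbf P_0\mathbf M_{k:0}^{\mathrm T},\,{\boldsymbol\Gamma}_k^{-1}\big\}.$$ Consequently, if there is a symmetric positive definite $\mathbf L$ with ${\boldsymbol\Gamma}_k\ge\mathbf L$, then $\mathbf P_k\le\mathbf L^{-1}$.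
   Context: $\mathbf A\le\mathbf B$ denotes the Loewner order (${\mathbf x}^{\mathrm T}\mathbf A{\mathbf x}\le{\mathbf x}^{\mathrm T}\mathbf B{\mathbf x}$ for all ${\mathbf x}$). For symmetric positive semi-definite $\mathbf A,\mathbf B,\mathbf C$, the statement $\mathbf A\le\min\{\mathbf B,\mathbf C\}$ means ${\mathbf x}^{\mathrm T}\mathbf A{\mathbf x}\le\min\{{\mathbf x}^{\mathrm T}\mathbf B{\mathbf x},{\mathbf x}^{\mathrm T}\mathbf C{\mathbf x}\}$ for all ${\mathbf x}\in\mathbb R^n$. *)

(* Defs.v *)
From HB Require Import structures.
From mathcomp Require Import all_boot all_order all_algebra.
From mathcomp Require Import reals.
Set Implicit Arguments. Unset Strict Implicit. Unset Printing Implicit Defensive.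
Import Order.TTheory GRing.Theory Num.Theory.
Local Open Scope ring_scope.

Section Defs.
Variable R : realType.

Definition qform n (A : 'M[R]_n) (x : 'cV[R]_n) : R := (x^T *m A *m x) ord0 ord0.

Definition loewner_le n (A B : 'M[R]_n) : Prop :=
  forall x : 'cV[R]_n, qform A x <= qform B x.

Definition loewner_le_min n (A B C : 'M[R]_n) : Prop :=
  forall x : 'cV[R]_n, qform A x <= Num.min (qform B x) (qform C x).

Definition symmetric n (A : 'M[R]_n) : Prop := A^T = A.

Definition psd n (A : 'M[R]_n) : Prop :=
  symmetric A /\ forall x : 'cV[R]_n, 0 <= qform A x.

Definition pd n (A : 'M[R]_n) : Prop :=
  symmetric A /\ forall x : 'cV[R]_n, x != 0 -> 0 < qform A x.

Definition Omega n d (H : nat -> 'M[R]_(d, n)) (Rm : nat -> 'M[R]_d) (k : nat)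
  : 'M[R]_n := (H k)^T *m invmx (Rm k) *m H k.

Fixpoint mprod_aux n (M : nat -> 'M[R]_n) (l m : nat) : 'M[R]_n :=
  match m with
  | 0 => 1%:M
  | m'.+1 => M (l + m'.+1)%N *m mprod_aux M l m'
  end.

(* M_{k:l} = M_k ... M_{l+1}, M_{k:k} = I (used for l <= k) *)
Definition Mprod n (M : nat -> 'M[R]_n) (k l : nat) : 'M[R]_n :=
  mprod_aux M l (k - l).

Fixpoint Pseq n d (M : nat -> 'M[R]_n) (H : nat -> 'M[R]_(d, n))
  (Rm : nat -> 'M[R]_d) (P0 : 'M[R]_n) (k : nat) : 'M[R]_n :=
  match k with
  | 0 => P0
  | k'.+1 => M k'.+1 *m invmx (1%:M + Pseq M H Rm P0 k' *m Omega H Rm k')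
               *m Pseq M H Rm P0 k' *m (M k'.+1)^T
  end.

Definition Gamma n d (M : nat -> 'M[R]_n) (H : nat -> 'M[R]_(d, n))
  (Rm : nat -> 'M[R]_d) (k : nat) : 'M[R]_n :=
  \sum_(l < k) (invmx (Mprod M k l))^T *m Omega H Rm l *m invmx (Mprod M k l).

End Defs.

(* Main.v *)
Require Import Defs.
From HB Require Import structures.
From mathcomp Require Import all_boot all_order all_algebra.
From mathcomp Require Import reals.
From mathcomp Require Import lra.
Set Implicit Arguments. Unset Strict Implicit. Unset Printing Implicit Defensive.
Import Order.TTheory GRing.Theory Num.Theory.
Local Open Scope ring_scope.

Definition bform (R : realType) n (A : 'M[R]_n) (x y : 'cV[R]_n) : R :=
  (x^T *m A *m y) ord0 ord0.

Lemma qformE (R : realType) n (A : 'M[R]_n) x : qform A x = bform A x x.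
Proof. by []. Qed.

Lemma bformDl (R : realType) n (A : 'M[R]_n) x1 x2 y :
  bform A (x1 + x2) y = bform A x1 y + bform A x2 y.
Proof. by rewrite /bform linearD /= !mulmxDl mxE. Qed.

Lemma bformDr (R : realType) n (A : 'M[R]_n) x y1 y2 :
  bform A x (y1 + y2) = bform A x y1 + bform A x y2.
Proof. by rewrite /bform !mulmxDr mxE. Qed.

Lemma bformNl (R : realType) n (A : 'M[R]_n) x y :
  bform A (- x) y = - bform A x y.
Proof. by rewrite /bform linearN /= !mulNmx mxE. Qed.

Lemma bformNr (R : realType) n (A : 'M[R]_n) x y :
  bform A x (- y) = - bform A x y.
Proof. by rewrite /bform !mulmxN mxE. Qed.

Lemma bformBl (R : realType) n (A : 'M[R]_n) x1 x2 y :
  bform A (x1 - x2) y = bform A x1 y - bform A x2 y.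
Proof. by rewrite bformDl bformNl. Qed.

Lemma bformBr (R : realType) n (A : 'M[R]_n) x y1 y2 :
  bform A x (y1 - y2) = bform A x y1 - bform A x y2.
Proof. by rewrite bformDr bformNr. Qed.

Lemma bformZl (R : realType) n (A : 'M[R]_n) t x y :
  bform A (t *: x) y = t * bform A x y.
Proof. by rewrite /bform linearZ /= -!scalemxAl mxE. Qed.

Lemma bformZr (R : realType) n (A : 'M[R]_n) t x y :
  bform A x (t *: y) = t * bform A x y.
Proof. by rewrite /bform -scalemxAr mxE. Qed.

Lemma bformDA (R : realType) n (A B : 'M[R]_n) x y :
  bform (A + B) x y = bform A x y + bform B x y.
Proof. by rewrite /bform mulmxDr mulmxDl mxE. Qed.

Lemma bform_mul (R : realType) n (A B C : 'M[R]_n) x y :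
  bform A (B *m x) (C *m y) = bform (B^T *m A *m C) x y.
Proof. by rewrite /bform trmx_mul !mulmxA. Qed.

Lemma bform_mull (R : realType) n (A B : 'M[R]_n) x y :
  bform A (B *m x) y = bform (B^T *m A) x y.
Proof. by rewrite /bform trmx_mul !mulmxA. Qed.

Lemma bform_mulr (R : realType) n (A C : 'M[R]_n) x y :
  bform A x (C *m y) = bform (A *m C) x y.
Proof. by rewrite /bform !mulmxA. Qed.

Lemma bform_tr (R : realType) n (A : 'M[R]_n) x y :
  bform A x y = bform A^T y x.
Proof.
rewrite /bform -[in LHS](trmxK (x^T *m A *m y)) mxE.
by rewrite !trmx_mul trmxK mulmxA.
Qed.

Lemma qform_tr (R : realType) n (A : 'M[R]_n) x : qform A^T x = qform A x.
Proof. by rewrite !qformE [RHS]bform_tr. Qed.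

Lemma qform_mul (R : realType) n (A B : 'M[R]_n) x :
  qform (B^T *m A *m B) x = qform A (B *m x).
Proof. by rewrite !qformE bform_mul. Qed.

Lemma qformD (R : realType) n (A B : 'M[R]_n) x :
  qform (A + B) x = qform A x + qform B x.
Proof. by rewrite !qformE bformDA. Qed.

Lemma qform1 (R : realType) n (A : 'M[R]_n) x : qform (1%:M *m A) x = qform A x.
Proof. by rewrite mul1mx. Qed.

Lemma psd_zero (R : realType) n (P : 'M[R]_n) z :
  P^T = P -> (forall x, 0 <= qform P x) -> qform P z = 0 -> P *m z = 0.
Proof.
move=> Ps Pp hz.
have key : forall y, bform P y z = 0.
  move=> y.
  pose b := bform P y z; pose q := qform P y.
  have hq : 0 <= q by apply: Pp.
  have H t : 0 <= 2 * t * b + t ^+ 2 * q.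
    have := Pp (z + t *: y).
    rewrite qformE bformDl !bformDr.
    have -> : bform P z (t *: y) = t * b.
      by rewrite bformZr bform_tr Ps.
    have -> : bform P (t *: y) z = t * b by rewrite bformZl.
    have -> : bform P (t *: y) (t *: y) = t ^+ 2 * q.
      by rewrite bformZl bformZr mulrA -expr2.
    have -> : bform P z z = 0 by rewrite -qformE.
    lra.
  have := H (- b / (q + 1)).
  have q1 : 0 < q + 1 by lra.
  set t := - b / (q + 1).
  have ht : t * (q + 1) = - b by rewrite /t divfK // gt_eqF.
  move=> h.
  have hb : b = - (t * (q + 1)) by rewrite ht opprK.
  rewrite hb in h.
  have t2 : t ^+ 2 <= 0 by nra.
  have t0 : t = 0.
    by apply/eqP; rewrite -sqrf_eq0 eq_le t2 sqr_ge0.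
  by have : b = 0 by rewrite hb t0 mul0r oppr0.
apply/matrixP => i j; rewrite (ord1 j) [RHS]mxE.
by rewrite -(key (delta_mx i 0)) /bform trmx_delta -mulmxA -rowE [RHS]mxE.
Qed.

Lemma pos_unit (R : realType) n (A : 'M[R]_n) :
  (forall x, x != 0 -> 0 < qform A x) -> A \in unitmx.
Proof.
move=> Ap; rewrite unitmxE unitfE; apply/negP => /det0P [v vn0 vA].
have := Ap v^T; rewrite trmx_eq0 => /(_ vn0).
by rewrite /qform trmxK vA mul0mx mxE ltxx.
Qed.

Lemma final_le (R : realType) n (G P : 'M[R]_n) :
  G^T = G -> (forall x, 0 <= qform G x) -> G \in unitmx ->
  (forall x, qform (P^T *m G *m P) x <= qform P x) ->
  forall x, qform P x <= qform (invmx G) x.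
Proof.
move=> Gs Gp Gu h x.
have := Gp (P *m x - invmx G *m x).
rewrite qformE bformBl !bformBr !bform_mul.
rewrite -!qformE.
have -> : P^T *m G *m invmx G = P^T by rewrite -mulmxA mulmxV // mulmx1.
have -> : (invmx G)^T *m G *m P = P by rewrite trmx_inv Gs mulVmx // mul1mx.
have -> : (invmx G)^T *m G *m invmx G = invmx G
  by rewrite trmx_inv Gs mulVmx // mul1mx.
rewrite qform_tr.
have := h x; lra.
Qed.

Lemma inv_sup (R : realType) n (A : 'M[R]_n) x y :
  A^T = A -> (forall x, 0 <= qform A x) -> A \in unitmx ->
  2 * bform 1%:M y x - qform A y <= qform (invmx A) x.
Proof.
move=> As Ap Au.
have := Ap (y - invmx A *m x).
rewrite qformE bformBl !bformBr.
rewrite (bform_mul A (invmx A) (invmx A)) (bform_mulr A (invmx A)) (bform_mull A (invmx A)) mulmxV //.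
rewrite trmx_inv As.
have -> : invmx A *m A = 1%:M by apply: mulVmx.
rewrite mul1mx (bform_tr 1%:M x) trmx1 !qformE; lra.
Qed.

Lemma inv_anti (R : realType) n (L G : 'M[R]_n) :
  L^T = L -> (forall x, 0 <= qform L x) -> L \in unitmx ->
  G^T = G -> G \in unitmx ->
  (forall x, qform L x <= qform G x) ->
  forall x, qform (invmx G) x <= qform (invmx L) x.
Proof.
move=> Ls Lp Lu Gs Gu LG x.
have := inv_sup x (invmx G *m x) Ls Lp Lu.
have := LG (invmx G *m x).
have GG : invmx G *m G = 1%:M by apply: mulVmx.
rewrite -[qform G _]qform_mul trmx_inv Gs GG mul1mx.
rewrite bform_mull trmx_inv Gs mulmx1 -qformE.
lra.
Qed.

Lemma step_unit (R : realType) n (P Om : 'M[R]_n) :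
  P^T = P -> (forall x, 0 <= qform P x) ->
  Om^T = Om -> (forall x, 0 <= qform Om x) ->
  (1%:M + P *m Om) \in unitmx.
Proof.
move=> Ps Pp Os Op.
rewrite unitmxE unitfE; apply/negP => /det0P [w wn0 wC].
set z := w^T.
have hz : z + Om *m (P *m z) = 0.
  have := congr1 trmx wC; rewrite trmx_mul linearD /= trmx1 trmx_mul Ps Os trmx0.
  by rewrite mulmxDl mul1mx mulmxA.
have h1 := congr1 (bform P z) hz.
have e : bform P z (Om *m (P *m z)) = qform Om (P *m z).
  by rewrite qformE bform_mul Ps !bform_mulr.
have e0 : bform P z 0 = 0 by rewrite /bform mulmx0 mxE.
rewrite bformDr e e0 -qformE in h1.
have q0 : qform P z = 0.
  have := Pp z; have := Op (P *m z); lra.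
have Pz := psd_zero Ps Pp q0.
move: hz; rewrite Pz mulmx0 addr0 => z0.
by move: wn0; rewrite -trmx_eq0 -/z z0 eqxx.
Qed.

Lemma bform1r (R : realType) n (B : 'M[R]_n) x y :
  bform 1%:M x (B *m y) = bform B x y.
Proof. by rewrite bform_mulr mul1mx. Qed.

Lemma bform1l (R : realType) n (B : 'M[R]_n) x y :
  bform 1%:M (B *m x) y = bform B^T x y.
Proof. by rewrite bform_mull mulmx1. Qed.

Lemma bformPOmP (R : realType) n (P Om : 'M[R]_n) y :
  P^T = P -> bform P y (Om *m (P *m y)) = qform Om (P *m y).
Proof. by move=> Ps; rewrite qformE bform_mul Ps !bform_mulr. Qed.

Lemma step (R : realType) n (P Om Ga : 'M[R]_n) :
  P^T = P -> (forall x, 0 <= qform P x) ->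
  Om^T = Om -> (forall x, 0 <= qform Om x) ->
  let A := invmx (1%:M + P *m Om) *m P in
  [/\ A^T = A, (forall x, 0 <= qform A x), (forall x, qform A x <= qform P x) &
   ((forall x, qform (P^T *m Ga *m P) x <= qform P x) ->
     forall x, qform (A^T *m (Ga + Om) *m A) x <= qform A x)].
Proof.
move=> Ps Pp Os Op; cbv zeta.
have Cu := step_unit Ps Pp Os Op.
set C := 1%:M + P *m Om in Cu *.
set A := invmx C *m P.
have CTu : C^T \in unitmx by rewrite unitmx_tr.
have CT : C^T = 1%:M + Om *m P by rewrite /C linearD /= trmx1 trmx_mul Ps Os.
have CP : C *m P = P *m C^T by rewrite CT /C mulmxDl mulmxDr mul1mx mulmx1 mulmxA.
have CC : invmx C *m C = 1%:M by apply: mulVmx.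
have TT : C^T *m invmx C^T = 1%:M by apply: mulmxV.
have TT' : invmx C^T *m C^T = 1%:M by apply: mulVmx.
have AE : A = P *m invmx C^T.
  rewrite -[P *m invmx C^T]mul1mx -CC -mulmxA (mulmxA C) CP -mulmxA TT mulmx1.
  by [].
have key : forall x, exists y, [/\ A *m x = P *m y,
    qform A x = qform P y + qform Om (P *m y) &
    qform P x = qform P y + 2 * qform Om (P *m y) + qform P (Om *m (P *m y))].
  move=> x; exists (invmx C^T *m x).
  set y := invmx C^T *m x.
  have hx : x = C^T *m y by rewrite /y mulmxA TT mul1mx.
  have hAx : A *m x = P *m y by rewrite AE hx mulmxA -(mulmxA P) TT' mulmx1.
  have CTy : C^T *m y = y + Om *m (P *m y) by rewrite CT mulmxDl mul1mx mulmxA.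
  split => //.
    rewrite qformE -[A]mul1mx -bform_mulr hAx hx CTy bformDl bform1r bform1l Os.
    by rewrite -!qformE.
  rewrite qformE hx CTy bformDl !bformDr bformPOmP //.
  rewrite (bform_tr P (Om *m _)) Ps bformPOmP // -!qformE; lra.
split.
- by rewrite AE trmx_mul trmx_inv trmxK Ps.
- move=> x; have [y [_ -> _]] := key x.
  by apply: addr_ge0.
- move=> x; have [y [_ -> ->]] := key x.
  have := Op (P *m y); have := Pp (Om *m (P *m y)); lra.
- move=> hG x; have [y [hAx -> _]] := key x.
  rewrite qform_mul hAx qformD -qform_mul.
  have := hG y; lra.
Qed.

Lemma invmxM (R : realType) n (A B : 'M[R]_n) :
  A \in unitmx -> B \in unitmx -> invmx (A *m B) = invmx B *m invmx A.
Proof.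
move=> Au Bu.
have ABu : A *m B \in unitmx by rewrite unitmx_mul Au Bu.
have h : invmx B *m invmx A *m (A *m B) = 1%:M.
  have e1 : invmx A *m A = 1%:M by apply: mulVmx.
  have e2 : invmx B *m B = 1%:M by apply: mulVmx.
  by rewrite -mulmxA (mulmxA (invmx A)) e1 mul1mx e2.
have e3 : (A *m B) *m invmx (A *m B) = 1%:M by apply: mulmxV.
by rewrite -[invmx (A *m B)]mul1mx -h -mulmxA e3 mulmx1.
Qed.

Lemma Mprod_S (R : realType) n (M : nat -> 'M[R]_n) k l :
  (l <= k)%N -> Mprod M k.+1 l = M k.+1 *m Mprod M k l.
Proof.
move=> lk; rewrite /Mprod subSn //=.
by rewrite addnS subnKC.
Qed.

Lemma Mprod_kk (R : realType) n (M : nat -> 'M[R]_n) k : Mprod M k k = 1%:M.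
Proof. by rewrite /Mprod subnn. Qed.

Lemma Mprod_unit (R : realType) n (M : nat -> 'M[R]_n) :
  (forall k, (1 <= k)%N -> M k \in unitmx) ->
  forall k l, (l <= k)%N -> Mprod M k l \in unitmx.
Proof.
move=> Mu; elim=> [|k IH] l.
  by rewrite leqn0 => /eqP ->; rewrite Mprod_kk unitmx1.
rewrite leq_eqVlt => /orP [/eqP ->|lk]; first by rewrite Mprod_kk unitmx1.
by rewrite Mprod_S // unitmx_mul Mu // IH.
Qed.

Lemma Gamma_S (R : realType) n d (M : nat -> 'M[R]_n) (H : nat -> 'M[R]_(d, n))
  (Rm : nat -> 'M[R]_d) k :
  (forall k, (1 <= k)%N -> M k \in unitmx) ->
  Gamma M H Rm k.+1 =
  (invmx (M k.+1))^T *m (Gamma M H Rm k + Omega H Rm k) *m invmx (M k.+1).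
Proof.
move=> Mu.
rewrite /Gamma big_ord_recr /= mulmxDr mulmxDl.
congr (_ + _).
  rewrite mulmx_sumr mulmx_suml; apply: eq_bigr => i _ /=.
  have ik : (i <= k)%N by apply: ltnW.
  rewrite Mprod_S // invmxM ?Mu ?Mprod_unit //.
  by rewrite trmx_mul !mulmxA.
by rewrite Mprod_S // Mprod_kk mulmx1.
Qed.

Lemma qform_mulg (R : realType) n m (A : 'M[R]_m) (B : 'M[R]_(m, n)) x :
  qform (B^T *m A *m B) x = qform A (B *m x).
Proof. by rewrite /qform trmx_mul !mulmxA. Qed.

Lemma qform_conj (R : realType) n (A B : 'M[R]_n) x :
  qform (B *m A *m B^T) x = qform A (B^T *m x).
Proof. by rewrite -qform_mul trmxK. Qed.

Lemma pd_psd (R : realType) n (A : 'M[R]_n) : pd A -> forall x, 0 <= qform A x.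
Proof.
move=> [_ Ap] x; have [->|xn0] := eqVneq x 0.
  by rewrite /qform mulmx0 mxE.
by apply: ltW; apply: Ap.
Qed.

Lemma Omega_props (R : realType) n d (H : nat -> 'M[R]_(d, n))
  (Rm : nat -> 'M[R]_d) k :
  pd (Rm k) -> (Omega H Rm k)^T = Omega H Rm k /\
               forall x, 0 <= qform (Omega H Rm k) x.
Proof.
move=> Rp; have Ru : Rm k \in unitmx by apply: pos_unit; case: Rp.
have Rs : (Rm k)^T = Rm k by case: Rp.
split.
  by rewrite /Omega !trmx_mul trmxK trmx_inv Rs mulmxA.
move=> x; rewrite /Omega qform_mulg.
set z := H k *m x.
have e : (invmx (Rm k))^T *m Rm k *m invmx (Rm k) = (invmx (Rm k))^T.
  have e1 : Rm k *m invmx (Rm k) = 1%:M by apply: mulmxV.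
  by rewrite -mulmxA e1 mulmx1.
by rewrite -qform_tr -e qform_mul; apply: pd_psd.
Qed.

Lemma invariant (R : realType) (n d : nat)
  (M : nat -> 'M[R]_n) (H : nat -> 'M[R]_(d, n)) (Rm : nat -> 'M[R]_d)
  (P0 : 'M[R]_n) :
  (forall k, (1 <= k)%N -> M k \in unitmx) ->
  (forall k, pd (Rm k)) ->
  psd P0 ->
  forall k, let P := Pseq M H Rm P0 k in let G := Gamma M H Rm k in
  [/\ P^T = P, (forall x, 0 <= qform P x),
      (forall x, qform (P^T *m G *m P) x <= qform P x),
      (forall x, qform P x <= qform (Mprod M k 0 *m P0 *m (Mprod M k 0)^T) x) &
      G^T = G /\ (forall x, 0 <= qform G x)].
Proof.
move=> Mu Rp [P0s P0p]; elim=> [|k IH]; cbv zeta.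
  have G0 : Gamma M H Rm 0 = 0 by rewrite /Gamma big_ord0.
  rewrite /= G0 Mprod_kk mul1mx trmx1 mulmx1 mulmx0 mul0mx.
  have q0 : forall x : 'cV[R]_n, qform (0 : 'M[R]_n) x = 0.
    by move=> x; rewrite /qform mulmx0 mul0mx mxE.
  split => //; [by move=> x; rewrite q0 | split; [by rewrite trmx0 | by move=> x; rewrite q0]].
move: IH; cbv zeta.
set P := Pseq M H Rm P0 k; set G := Gamma M H Rm k.
move=> [Ps Pp PG PM [Gs Gp]].
have [Os Op] := Omega_props H (Rp k).
set Om := Omega H Rm k in Os Op.
have [As Ap AP AG] := step G Ps Pp Os Op.
have -> : Pseq M H Rm P0 k.+1 = M k.+1 *m (invmx (1%:M + P *m Om) *m P) *m (M k.+1)^T.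
  by rewrite /= !mulmxA.
set A := invmx (1%:M + P *m Om) *m P in As Ap AP AG *.
rewrite Gamma_S //.
set Mk := M k.+1.
have Mku : Mk \in unitmx by apply: Mu.
set N := invmx Mk.
have NM : N *m Mk = 1%:M by apply: mulVmx.
have MN : Mk^T *m N^T = 1%:M by rewrite -trmx_mul NM trmx1.
have P'sym : (Mk *m A *m Mk^T)^T = Mk *m A *m Mk^T.
  by rewrite trmx_mul (trmx_mul Mk A) trmxK As mulmxA.
split.
- exact: P'sym.
- by move=> x; rewrite qform_conj.
- move=> x; rewrite P'sym.
  have -> : Mk *m A *m Mk^T *m (N^T *m (G + Om) *m N) *m (Mk *m A *m Mk^T)
            = Mk *m (A^T *m (G + Om) *m A) *m Mk^T.
    rewrite As !mulmxA -(mulmxA _ Mk^T N^T) MN mulmx1.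
    by rewrite -(mulmxA _ N Mk) NM mulmx1.
  rewrite !qform_conj; exact: AG.
- move=> x; rewrite qform_conj.
  rewrite Mprod_S // trmx_mul.
  have -> : Mk *m Mprod M k 0 *m P0 *m ((Mprod M k 0)^T *m Mk^T)
            = Mk *m (Mprod M k 0 *m P0 *m (Mprod M k 0)^T) *m Mk^T by rewrite !mulmxA.
  rewrite qform_conj.
  exact: le_trans (AP _) (PM _).
split.
- by rewrite !trmx_mul trmxK linearD /= Gs Os mulmxA.
- by move=> x; rewrite qform_mul qformD; apply: addr_ge0.
Qed.

Unset Implicit Arguments.
Set Strict Implicit.
Theorem mainTheorem3 (R : realType) (n d : nat)
  (M : nat -> 'M[R]_n) (H : nat -> 'M[R]_(d, n)) (Rm : nat -> 'M[R]_d)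
  (P0 : 'M[R]_n) :
  (0 < n)%N -> (0 < d)%N ->
  (forall k, (1 <= k)%N -> M k \in unitmx) ->
  (forall k, pd (Rm k)) ->
  psd P0 ->
  forall k : nat,
    (\det (Gamma M H Rm k) != 0 ->
       loewner_le (Pseq M H Rm P0 k) (invmx (Gamma M H Rm k)) /\
       loewner_le_min (Pseq M H Rm P0 k)
         (Mprod M k 0 *m P0 *m (Mprod M k 0)^T) (invmx (Gamma M H Rm k))) /\
    (forall L : 'M[R]_n, pd L -> loewner_le L (Gamma M H Rm k) ->
       loewner_le (Pseq M H Rm P0 k) (invmx L)).
Proof.
move=> _ _ Mu Rp P0p k.
have [Ps Pp PG PM [Gs Gp]] := invariant H Mu Rp P0p k.
have part1 : \det (Gamma M H Rm k) != 0 ->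
    loewner_le (Pseq M H Rm P0 k) (invmx (Gamma M H Rm k)).
  move=> dG; have Gu : Gamma M H Rm k \in unitmx by rewrite unitmxE unitfE.
  exact: final_le Gs Gp Gu PG.
split.
  move=> dG; split; first exact: part1.
  move=> x; rewrite le_min; apply/andP; split; first exact: PM.
  exact: part1.
move=> L Lp LG.
have Gu : Gamma M H Rm k \in unitmx.
  apply: pos_unit => x xn0.
  exact: lt_le_trans (proj2 Lp x xn0) (LG x).
have Lu : L \in unitmx by apply: pos_unit; case: Lp.
have dG : \det (Gamma M H Rm k) != 0 by rewrite -unitfE -unitmxE.
have Ls : L^T = L by case: Lp.
move=> x; apply: le_trans (part1 dG x) _.
exact: inv_anti Ls (pd_psd Lp) Lu Gs Gu LG x.
Qed.
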